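(* Let $H$ be a compact Lie group with a fixed maximal torus, so that every finite-dimensional complex representation of $H$ decomposes into weight spaces. For a representation $M$, write $M_{0}$ for its zero-weight subspace. Then: (i) for every finite-dimensional complex representation $N$ of $H$, with dual (conjugate) representation $\bar N$, one has $\dim\bigl((\bar N\otimes N)_{0}\bigr)\ge \dim N$; (ii) if $N$ is a quaternionic representation of $H$ (i.e. $N$ admits a nondegenerate $H$-invariant antisymmetric bilinear form), then $\dim\bigl((\Lambda^2 N)_{0}\bigr)\ge \tfrac12\dim N$; (iii) if $N$ is a real representation of $H$ (i.e. $N$ admits a nondegenerate $H$-invariant symmetric bilinear form), then $\dim\bigl((S^2 N)_{0}\bigr)\ge \tfrac12\dim N$.
   Context: Weights are taken with respect to the chosen maximal torus; the representations $N$ need not be irreducible. $\Lambda^2$ and $S^2$ denote the antisymmetric and symmetric tensor squares. *)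

(* Defs.v *)
From HB Require Import structures.
From mathcomp Require Import all_boot all_order all_algebra.
From mathcomp Require Import reals.
From mathcomp.real_closed Require Import complex.
Set Implicit Arguments. Unset Strict Implicit. Unset Printing Implicit Defensive.
Import Order.TTheory GRing.Theory Num.Theory.
Local Open Scope ring_scope.

Notation Cx R := (complex R).

Definition in_torus (R : realType) (r : nat) (z : 'rV[Cx R]_r) : Prop :=
  forall k : 'I_r, `|z 0 k| = 1.

Definition tmul (R : realType) (r : nat) (z w : 'rV[Cx R]_r) : 'rV[Cx R]_r :=
  \row_k (z 0 k * w 0 k).

Definition character (R : realType) (r : nat) (lam : 'rV[int]_r)
  (z : 'rV[Cx R]_r) : Cx R :=
  \prod_(k < r) (z 0 k) ^ (lam 0 k).

Definition torus_hom (R : realType) (r : nat) (H : Type) (mulH : H -> H -> H)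
  (iota : 'rV[Cx R]_r -> H) : Prop :=
  forall z w, in_torus z -> in_torus w -> iota (tmul z w) = mulH (iota z) (iota w).

Definition is_rep (R : realType) (n : nat) (H : Type) (mulH : H -> H -> H)
  (rho : H -> 'M[Cx R]_n) : Prop :=
  (forall a b, rho (mulH a b) = rho a *m rho b) /\ (forall a, rho a \in unitmx).

Definition weight_vector (R : realType) (r n : nat) (H : Type)
  (iota : 'rV[Cx R]_r -> H) (rho : H -> 'M[Cx R]_n)
  (lam : 'rV[int]_r) (v : 'cV[Cx R]_n) : Prop :=
  forall z, in_torus z -> rho (iota z) *m v = character lam z *: v.

(* Standing assumption: C^n decomposes into weight spaces, i.e. it has a
   basis (the columns of an invertible matrix P) of weight vectors. *)
Definition weight_decomposable (R : realType) (r n : nat) (H : Type)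
  (iota : 'rV[Cx R]_r -> H) (rho : H -> 'M[Cx R]_n) : Prop :=
  exists P : 'M[Cx R]_n, P \in unitmx /\
    forall j : 'I_n, exists lam : 'rV[int]_r, weight_vector iota rho lam (col j P).

(* Tensors in N (x) N, resp. Nbar (x) N, are encoded as n x n matrices M
   (M = sum M_ij e_i (x) e_j); the action of a matrix A of N is
   M |-> A M A^T on N (x) N and M |-> (A^-1)^T M A^T on N^* (x) N.
   A zero-weight vector is one fixed by the whole torus. *)
Definition zero_weight_dualtens (R : realType) (r n : nat) (H : Type)
  (iota : 'rV[Cx R]_r -> H) (rho : H -> 'M[Cx R]_n) (M : 'M[Cx R]_n) : Prop :=
  forall z, in_torus z ->
    (invmx (rho (iota z)))^T *m M *m (rho (iota z))^T = M.

Definition zero_weight_tens (R : realType) (r n : nat) (H : Type)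
  (iota : 'rV[Cx R]_r -> H) (rho : H -> 'M[Cx R]_n) (M : 'M[Cx R]_n) : Prop :=
  forall z, in_torus z -> rho (iota z) *m M *m (rho (iota z))^T = M.

(* Lambda^2 N = antisymmetric tensors, S^2 N = symmetric tensors in N (x) N. *)
Definition zero_weight_alt2 (R : realType) (r n : nat) (H : Type)
  (iota : 'rV[Cx R]_r -> H) (rho : H -> 'M[Cx R]_n) (M : 'M[Cx R]_n) : Prop :=
  M^T = - M /\ zero_weight_tens iota rho M.

Definition zero_weight_sym2 (R : realType) (r n : nat) (H : Type)
  (iota : 'rV[Cx R]_r -> H) (rho : H -> 'M[Cx R]_n) (M : 'M[Cx R]_n) : Prop :=
  M^T = M /\ zero_weight_tens iota rho M.

(* W : 'M_(n*n) represents (by its row space, under mxvec) exactly the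
   subspace {M | P M}; its dimension is then \rank W. *)
Definition represents_subspace (K : fieldType) (n m : nat)
  (P : 'M[K]_n -> Prop) (W : 'M[K]_(m, n * n)) : Prop :=
  forall M : 'M[K]_n, (mxvec M <= W)%MS <-> P M.

Definition invariant_form (R : realType) (n : nat) (H : Type)
  (rho : H -> 'M[Cx R]_n) (B : 'M[Cx R]_n) : Prop :=
  forall h, (rho h)^T *m B *m rho h = B.

Definition quaternionic (R : realType) (n : nat) (H : Type)
  (rho : H -> 'M[Cx R]_n) : Prop :=
  exists B : 'M[Cx R]_n, B \in unitmx /\ B^T = - B /\ invariant_form rho B.

Definition real_rep (R : realType) (n : nat) (H : Type)
  (rho : H -> 'M[Cx R]_n) : Prop :=
  exists B : 'M[Cx R]_n, B \in unitmx /\ B^T = B /\ invariant_form rho B.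

(* Main.v *)
Require Import Defs.
From HB Require Import structures.
From mathcomp Require Import all_boot all_order all_algebra.
From mathcomp Require Import reals.
From mathcomp.real_closed Require Import complex.
Import Order.TTheory GRing.Theory Num.Theory.
Local Open Scope ring_scope.

Lemma key1 (K : fieldType) n m (W : 'M[K]_(m, n*n)) (f : 'rV[K]_n -> 'rV[K]_(n*n)) :
  linear f -> (forall y, (f y <= W)%MS) -> (forall y, f y = 0 -> y = 0) ->
  (n <= \rank W)%N.
Proof.
move=> lf fW finj.
pose fL : {linear _ -> _} := HB.pack f (GRing.isLinear.Build _ _ _ _ f lf).
have AW : (lin1_mx fL <= W)%MS.
  by apply/row_subP => i; rewrite rowE mul_rV_lin1; apply: fW.
have fr : row_free (lin1_mx fL).
  rewrite -kermx_eq0 -submx0; apply/row_subP => i.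
  have : row i (kermx (lin1_mx fL)) *m lin1_mx fL = 0.
    by apply/sub_kermxP; apply: row_sub.
  by rewrite mul_rV_lin1 => /finj ->; rewrite sub0mx.
by apply: leq_trans (mxrankS AW); rewrite (eqP fr).
Qed.

Lemma key2 (K : fieldType) n m (W : 'M[K]_(m, n*n)) (f1 f2 : 'rV[K]_n -> 'rV[K]_(n*n)) :
  linear f1 -> linear f2 -> (forall y, (f1 y <= W)%MS) -> (forall y, (f2 y <= W)%MS) ->
  (forall y, f1 y = 0 -> f2 y = 0 -> y = 0) ->
  (n <= 2 * \rank W)%N.
Proof.
move=> lf1 lf2 fW1 fW2 finj.
pose fL1 : {linear _ -> _} := HB.pack f1 (GRing.isLinear.Build _ _ _ _ f1 lf1).
pose fL2 : {linear _ -> _} := HB.pack f2 (GRing.isLinear.Build _ _ _ _ f2 lf2).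
have AW1 : (lin1_mx fL1 <= W)%MS.
  by apply/row_subP => i; rewrite rowE mul_rV_lin1; apply: fW1.
have AW2 : (lin1_mx fL2 <= W)%MS.
  by apply/row_subP => i; rewrite rowE mul_rV_lin1; apply: fW2.
have fr : row_free (row_mx (lin1_mx fL1) (lin1_mx fL2)).
  rewrite -kermx_eq0 -submx0; apply/row_subP => i.
  have : row i (kermx (row_mx (lin1_mx fL1) (lin1_mx fL2))) *m
          row_mx (lin1_mx fL1) (lin1_mx fL2) = 0.
    by apply/sub_kermxP; apply: row_sub.
  rewrite mul_mx_row !mul_rV_lin1 -row_mx0 => /eq_row_mx [h1 h2].
  by rewrite (finj _ h1 h2) sub0mx.
rewrite -{1}(eqP fr) -mxrank_tr tr_row_mx -addsmxE.
apply: leq_trans (mxrank_adds_leqif _ _) _.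
rewrite !mxrank_tr mul2n -addnn leq_add //; exact: mxrankS.
Qed.

Section Main.
Set Implicit Arguments. Unset Strict Implicit.
Variable R : realType.
Local Notation C := (Cx R).

Lemma diagz n (A P : 'M[C]_n) :
  (forall j, exists c, A *m col j P = c *: col j P) ->
  exists d : 'rV[C]_n, A *m P = P *m diag_mx d.
Proof.
move=> h; have [c hc] := fin_all_exists h.
exists (\row_j c j); apply/matrixP => i j.
have e := congr1 (fun M : 'cV_n => M i 0) (hc j).
rewrite /= !colE mulmxA -!colE !mxE in e.
by rewrite mul_mx_diag !mxE mulrC -e.
Qed.

Lemma wdiag (H : Type) r (iota : 'rV[C]_r -> H) n (rho : H -> 'M[C]_n) P z :
  (forall j : 'I_n, exists lam : 'rV[int]_r, weight_vector iota rho lam (col j P)) ->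
  in_torus z -> exists d : 'rV[C]_n, rho (iota z) *m P = P *m diag_mx d.
Proof.
move=> hw hz; apply: diagz => j; have [lam hl] := hw j.
by exists (character lam z); apply: hl.
Qed.

Lemma diag_eq0 n (y : 'rV[C]_n) : diag_mx y = 0 -> y = 0.
Proof.
move=> h; apply/rowP => j; have := congr1 (fun M : 'M_n => M j j) h.
by rewrite !mxE eqxx mulr1n.
Qed.

Lemma comm_lemma n (Pt Pit D Y : 'M[C]_n) : Pt *m Pit = 1%:M -> Y *m D = D *m Y ->
  Pit *m Y *m Pt *m (Pit *m D *m Pt) = Pit *m D *m Pt *m (Pit *m Y *m Pt).
Proof.
move=> h c.
rewrite -!mulmxA (mulmxA Pt) h mul1mx (mulmxA Y) c.
by rewrite (mulmxA Pt) h mul1mx !mulmxA.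
Qed.

Lemma part1 (H : Type) r (iota : 'rV[C]_r -> H) n (rho : H -> 'M[C]_n) :
  (forall a, rho a \in unitmx) -> weight_decomposable iota rho ->
  forall W : 'M[C]_(n * n),
    represents_subspace (zero_weight_dualtens iota rho) W -> (n <= \rank W)%N.
Proof.
move=> hu [P [hP hw]] W hW.
pose f (y : 'rV[C]_n) := mxvec ((invmx P)^T *m diag_mx y *m P^T).
apply: (@key1 _ _ _ W f).
- move=> a u v; rewrite /f linearP /= mulmxDr mulmxDl -scalemxAr -scalemxAl.
  by rewrite linearP.
- move=> y; apply/hW => z hz.
  have [d hd] := @wdiag _ _ iota _ rho _ _ hw hz.
  set A := rho (iota z).
  have hA : A = P *m diag_mx d *m invmx P by rewrite -hd mulmxK.
  have PP : P^T *m (invmx P)^T = 1%:M by rewrite -trmx_mul mulVmx // trmx1.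
  have hAT : A^T = (invmx P)^T *m diag_mx d *m P^T.
    by rewrite hA !trmx_mul tr_diag_mx mulmxA.
  have comm : (invmx P)^T *m diag_mx y *m P^T *m A^T
            = A^T *m ((invmx P)^T *m diag_mx y *m P^T).
    by rewrite hAT; apply: comm_lemma => //; apply: diag_mx_comm.
  rewrite -mulmxA comm mulmxA -trmx_mul mulmxV ?hu // trmx1 mul1mx //.
- move=> y /eqP; rewrite mxvec_eq0 => /eqP h; apply: diag_eq0.
  have : P^T *m ((invmx P)^T *m diag_mx y *m P^T) *m (invmx P)^T = 0.
    by rewrite h mulmx0 mul0mx.
  have PP : P^T *m (invmx P)^T = 1%:M by rewrite -trmx_mul mulVmx // trmx1.
  by rewrite !mulmxA PP mul1mx -mulmxA PP mulmx1.
Qed.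

Lemma lin_conj n (P1 P2 : 'M[C]_n) (g : 'rV[C]_n -> 'M[C]_n) :
  (forall a u v, g (a *: u + v) = a *: g u + g v) ->
  linear (fun y => mxvec (P1 *m g y *m P2)).
Proof.
move=> hg a u v /=.
by rewrite hg mulmxDr mulmxDl -scalemxAr -scalemxAl linearP.
Qed.

Lemma lin_Z1 n (Q : 'M[C]_n) a (u v : 'rV[C]_n) :
  diag_mx (a *: u + v) *m Q + Q *m diag_mx (a *: u + v) =
  a *: (diag_mx u *m Q + Q *m diag_mx u) + (diag_mx v *m Q + Q *m diag_mx v).
Proof.
rewrite linearP /= mulmxDl mulmxDr -scalemxAl -scalemxAr scalerDr.
by rewrite addrACA.
Qed.

Lemma lin_Z2 n (Q : 'M[C]_n) a (u v : 'rV[C]_n) :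
  diag_mx (a *: u + v) *m Q - Q *m diag_mx (a *: u + v) =
  a *: (diag_mx u *m Q - Q *m diag_mx u) + (diag_mx v *m Q - Q *m diag_mx v).
Proof.
rewrite linearP /= mulmxDl mulmxDr -scalemxAl -scalemxAr scalerBr opprD.
by rewrite addrACA.
Qed.

Lemma tr_conj n (P Z : 'M[C]_n) eps : Z^T = eps *: Z ->
  (P *m Z *m P^T)^T = eps *: (P *m Z *m P^T).
Proof. by move=> h; rewrite !trmx_mul trmxK h -scalemxAl -scalemxAr mulmxA. Qed.

Lemma tr_Z1 n (Y Q : 'M[C]_n) eps : Y^T = Y -> Q^T = eps *: Q ->
  (Y *m Q + Q *m Y)^T = eps *: (Y *m Q + Q *m Y).
Proof.
move=> hY hQ; rewrite linearD /= !trmx_mul hY hQ -scalemxAl -scalemxAr scalerDr.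
by rewrite addrC.
Qed.

Lemma tr_Z2 n (Y U : 'M[C]_n) eps : Y^T = Y -> U^T = - eps *: U ->
  (Y *m U - U *m Y)^T = eps *: (Y *m U - U *m Y).
Proof.
move=> hY hU; rewrite linearB /= !trmx_mul hY hU -scalemxAl -scalemxAr.
by rewrite !scaleNr scalerBr opprK addrC.
Qed.

Lemma tens_inv n (A P D Z : 'M[C]_n) : A *m P = P *m D -> D^T = D ->
  D *m Z *m D = Z -> A *m (P *m Z *m P^T) *m A^T = P *m Z *m P^T.
Proof.
move=> hAP hD hZ.
rewrite !mulmxA hAP -(mulmxA _ P^T A^T) -trmx_mul hAP trmx_mul hD.
by rewrite !mulmxA -(mulmxA P D Z) -(mulmxA P (D *m Z) D) hZ.
Qed.

Lemma DQD n (A P D B : 'M[C]_n) : A *m P = P *m D -> D^T = D ->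
  A^T *m B *m A = B -> D *m (P^T *m B *m P) *m D = P^T *m B *m P.
Proof.
move=> hAP hD hinv.
rewrite -{1}hD !mulmxA -(trmx_mul P D) -hAP -(mulmxA _ P D) -hAP.
by rewrite trmx_mul mulmxA -(mulmxA P^T A^T B) -(mulmxA P^T (A^T *m B) A) hinv.
Qed.

Lemma conjY1 n (D Y Q : 'M[C]_n) : D *m Y = Y *m D -> D *m Q *m D = Q ->
  D *m (Y *m Q) *m D = Y *m Q.
Proof.
move=> hc hq.
by rewrite (mulmxA D Y Q) hc -(mulmxA Y D Q) -(mulmxA Y (D *m Q) D) hq.
Qed.

Lemma conjY2 n (D Y Q : 'M[C]_n) : D *m Y = Y *m D -> D *m Q *m D = Q ->
  D *m (Q *m Y) *m D = Q *m Y.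
Proof.
move=> hc hq.
by rewrite (mulmxA D Q Y) -(mulmxA (D *m Q) Y D) -hc (mulmxA (D *m Q) D Y) hq.
Qed.

Lemma conj_eq0 n (P Z : 'M[C]_n) : P \in unitmx -> P *m Z *m P^T = 0 -> Z = 0.
Proof.
move=> hP h.
have <- : invmx P *m (P *m Z *m P^T) *m (invmx P)^T = Z.
  rewrite !mulmxA mulVmx // mul1mx -mulmxA -trmx_mul mulVmx // trmx1.
  by rewrite mulmx1.
by rewrite h mulmx0 mul0mx.
Qed.

Lemma rowQ n (Q : 'M[C]_n) i : Q \in unitmx -> exists j, Q i j != 0.
Proof.
move=> hQ; case: (boolP [exists j, Q i j != 0]) => [/existsP [j hj]|/existsPn h].
  by exists j.
have := congr1 (fun M : 'M_n => M i i) (mulmxV hQ).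
rewrite !mxE eqxx /= big1 => [e|j _]; last by have := h j; rewrite negbK => /eqP ->; rewrite mul0r.
by move: e => /eqP; rewrite eq_sym oner_eq0.
Qed.

Lemma part23 (H : Type) r (iota : 'rV[C]_r -> H) n (rho : H -> 'M[C]_n) (eps : C) :
  (eps = 1 \/ eps = -1) ->
  weight_decomposable iota rho ->
  (exists B, B \in unitmx /\ B^T = eps *: B /\ invariant_form rho B) ->
  forall W : 'M[C]_(n * n),
    (forall M, M^T = eps *: M -> zero_weight_tens iota rho M -> (mxvec M <= W)%MS) ->
    (n <= 2 * \rank W)%N.
Proof.
move=> heps [P [hP hw]] [B [hB [hBt hinv]]] W hW.
have [Q hQdef] : {Q | Q = P^T *m B *m P} by eexists.
have hQt : Q^T = eps *: Q.
  by rewrite hQdef !trmx_mul trmxK hBt -scalemxAl -scalemxAr mulmxA.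
have hQu : Q \in unitmx by rewrite hQdef !unitmx_mul unitmx_tr hP hB.
have hQe : forall i j, Q j i = eps * Q i j.
  by move=> i j; have := congr1 (fun M : 'M_n => M i j) hQt; rewrite !mxE.
have [U hUe] : {U : 'M[C]_n | forall i j,
    U i j = if (i < j)%N then Q i j else if (j < i)%N then - Q i j else 0}.
  by exists (\matrix_(i, j) (if (i < j)%N then Q i j else if (j < i)%N then - Q i j else 0)) => i j; rewrite mxE.
have hUt : U^T = - eps *: U.
  apply/matrixP => i j; rewrite !mxE !hUe.
  case: (ltngtP i j) => h.
  - by rewrite hQe mulNr.
  - by rewrite hQe mulNr mulrN opprK.
  - by rewrite mulr0.
pose f1 (y : 'rV[C]_n) := mxvec (P *m (diag_mx y *m Q + Q *m diag_mx y) *m P^T).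
pose f2 (y : 'rV[C]_n) := mxvec (P *m (diag_mx y *m U - U *m diag_mx y) *m P^T).
apply: (@key2 _ _ _ W f1 f2).
- by apply: lin_conj => a u v; apply: lin_Z1.
- by apply: lin_conj => a u v; apply: lin_Z2.
- move=> y; apply: hW.
    by apply: tr_conj; apply: tr_Z1 => //; rewrite tr_diag_mx.
  move=> z hz; have [d hd] := @wdiag _ _ iota _ rho _ _ hw hz.
  have hD : (diag_mx d)^T = diag_mx d by rewrite tr_diag_mx.
  have hq := DQD hd hD (hinv (iota z)); rewrite -hQdef in hq.
  apply: (tens_inv hd hD).
  rewrite mulmxDr mulmxDl conjY1 ?conjY2 //; exact: diag_mx_comm.
- move=> y; apply: hW.
    by apply: tr_conj; apply: tr_Z2 => //; rewrite tr_diag_mx.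
  move=> z hz; have [d hd] := @wdiag _ _ iota _ rho _ _ hw hz.
  have hD : (diag_mx d)^T = diag_mx d by rewrite tr_diag_mx.
  have hq := DQD hd hD (hinv (iota z)); rewrite -hQdef in hq.
  have hqe : forall i j, d 0 i * Q i j * d 0 j = Q i j.
    move=> i j; have := congr1 (fun M : 'M_n => M i j) hq.
    by rewrite mul_mx_diag mul_diag_mx !mxE.
  have hu : diag_mx d *m U *m diag_mx d = U.
    apply/matrixP => i j; rewrite mul_mx_diag mul_diag_mx !mxE !hUe.
    case: ifP => _; first exact: hqe.
    case: ifP => _; first by rewrite mulrN mulNr hqe.
    by rewrite mulr0 mul0r.
  apply: (tens_inv hd hD).
  rewrite mulmxBr mulmxBl conjY1 ?conjY2 //; exact: diag_mx_comm.
- move=> y /eqP; rewrite mxvec_eq0 => /eqP /(conj_eq0 hP) h1.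
  move=> /eqP; rewrite mxvec_eq0 => /eqP /(conj_eq0 hP) h2.
  apply/rowP => i; rewrite mxE.
  have [j hj] := rowQ i hQu.
  have e1 := congr1 (fun M : 'M_n => M i j) h1.
  have e2 := congr1 (fun M : 'M_n => M i j) h2.
  rewrite /= mul_mx_diag mul_diag_mx !mxE in e1.
  rewrite /= mul_mx_diag mul_diag_mx !mxE in e2.
  have s1 : y 0 i + y 0 j = 0.
    by move: e1; rewrite mulrC -mulrDr => /eqP; rewrite mulf_eq0 (negbTE hj) /= => /eqP.
  have s2 : y 0 i - y 0 j = 0.
    have [->|nij] := eqVneq i j; first by rewrite subrr.
    have hU : U i j != 0.
      rewrite hUe; case: (ltngtP i j) => hij; [exact: hj | by rewrite oppr_eq0 |].
      by move: nij; rewrite (ord_inj hij) eqxx.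
    by move: e2; rewrite [U i j * _]mulrC -mulrBl => /eqP; rewrite mulf_eq0 (negbTE hU) orbF => /eqP.
  have : (y 0 i + y 0 j) + (y 0 i - y 0 j) = 0 by rewrite s1 s2 addr0.
  rewrite addrACA subrr addr0 -mulr2n => /eqP; rewrite mulrn_eq0 /= => /eqP //.
Qed.
End Main.

Theorem mainTheorem1 (R : realType) (H : Type) (mulH : H -> H -> H) (r : nat)
  (iota : 'rV[Cx R]_r -> H) (hiota : torus_hom mulH iota) :
  (forall (n : nat) (rho : H -> 'M[Cx R]_n), is_rep mulH rho ->
     weight_decomposable iota rho ->
     forall W : 'M[Cx R]_(n * n),
       represents_subspace (zero_weight_dualtens iota rho) W ->
       (n <= \rank W)%N)
  /\
  (forall (n : nat) (rho : H -> 'M[Cx R]_n), is_rep mulH rho ->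
     weight_decomposable iota rho -> quaternionic rho ->
     forall W : 'M[Cx R]_(n * n),
       represents_subspace (zero_weight_alt2 iota rho) W ->
       (n <= 2 * \rank W)%N)
  /\
  (forall (n : nat) (rho : H -> 'M[Cx R]_n), is_rep mulH rho ->
     weight_decomposable iota rho -> real_rep rho ->
     forall W : 'M[Cx R]_(n * n),
       represents_subspace (zero_weight_sym2 iota rho) W ->
       (n <= 2 * \rank W)%N).
Proof.
split; [|split].
- move=> n rho [_ hu] hwd W hW; exact: (part1 hu hwd hW).
- move=> n rho _ hwd [B [hB [hBt hinv]]] W hW.
  apply: (@part23 R H r iota n rho (-1) (or_intror erefl) hwd).
    by exists B; rewrite scaleN1r.
  by move=> M hM hz; apply/hW; split => //; rewrite hM scaleN1r.
- move=> n rho _ hwd [B [hB [hBt hinv]]] W hW.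
  apply: (@part23 R H r iota n rho 1 (or_introl erefl) hwd).
    by exists B; rewrite scale1r.
  by move=> M hM hz; apply/hW; split => //; rewrite hM scale1r.
Qed.
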